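(* Let $m,n\ge1$ and let $u$ be a vertex of the unweighted complete bipartite graph $K_{m,n}$ lying in the part of size $m$. Then $u$ is sedentary if and only if $m\ge3$.
   Context: For a graph with adjacency matrix $A$, the transition matrix is $U(t)=e^{itA}$. A vertex $u$ is sedentary if $\inf_{t>0}|U(t)_{u,u}|\ge C$ for some constant $0<C\le1$. *)

(* Defs.v *)
From HB Require Import structures.
From mathcomp Require Import all_boot all_order all_algebra.
From mathcomp Require Import complex.
From mathcomp Require Import all_classical all_reals all_analysis.
Set Implicit Arguments. Unset Strict Implicit. Unset Printing Implicit Defensive.
Import Order.TTheory GRing.Theory Num.Theory ComplexField.
Import numFieldTopology.Exports numFieldNormedType.Exports.
Local Open Scope ring_scope.

HB.instance Definition _ (R : rcfType) :=
  NormedModule.copy (complex R) (complex R)^o.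

(* Vertices of K_{m,n} are 'I_(m+n); vertices i < m form the part of size m,
   vertices i >= m form the part of size n. *)
Definition Kmn_adj (R : realType) (m n : nat) : 'M[R[i]]_(m + n) :=
  \matrix_(i, j) (((i < m)%N != (j < m)%N)%:R).

Definition mxexp (R : realType) (N : nat) (M : 'M[R[i]]_N) : 'M[R[i]]_N :=
  \matrix_(i, j) limn (series (fun k : nat => (M ^+ k) i j / (k`!)%:R)).

Definition transition (R : realType) (N : nat) (A : 'M[R[i]]_N) (t : R)
  : 'M[R[i]]_N := mxexp ((('i%C * (t%:C)%C) : R[i]) *: A).

(* u is sedentary: there is 0 < C <= 1 with inf_{t>0} |U(t)_{u,u}| >= C,
   i.e. |U(t)_{u,u}| >= C for all t > 0. *)
Definition sedentary (R : realType) (N : nat) (A : 'M[R[i]]_N) (u : 'I_N) : Prop :=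
  exists C : R, 0 < C <= 1 /\
    forall t : R, 0 < t -> (C%:C)%C <= `|transition A t u u|.

(* Main.v *)
Require Import Defs.
From HB Require Import structures.
From mathcomp Require Import all_boot all_order all_algebra.
From mathcomp Require Import complex.
From mathcomp Require Import all_classical all_reals all_analysis.
From mathcomp Require Import ring lra zify.
Import Order.TTheory GRing.Theory Num.Theory ComplexField.
Import numFieldTopology.Exports numFieldNormedType.Exports.
Local Open Scope classical_set_scope.
Local Open Scope ring_scope.

Lemma normR (R : realType) (r : R) : `|r%:C%C| = `|r|%:C%C.
Proof. by rewrite normc_def /= expr0n addr0 sqrtr_sqr. Qed.

Lemma cvgC (R : realType) (y : nat -> R) (L : R) :
  y @ \oo --> L -> (fun N => (y N)%:C%C) @ \oo --> (L%:C%C : R[i]).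
Proof.
move=> /cvgrPdist_lt hy; apply/cvgrPdist_lt => e e0.
case: e e0 => a b; rewrite ltcE /= => /andP [/eqP -> a0].
have -> : (a +i* 0)%C = a%:C%C by [].
near=> N.
rewrite -rmorphB normR ltcR.
near: N; exact: hy.
Unshelve. all: by end_near.
Qed.

Section Pow.
Variables (R : realType) (m n : nat).
Local Notation A := (Kmn_adj R m n).
Local Notation side i := (nat_of_ord i < m)%N.

Lemma mulA_entry (B : 'M[R[i]]_(m + n)) (g : bool -> bool -> nat) i l :
  (forall i k, B i k = (g (side i) (side k))%:R) ->
  (B * A) i l = (g (side i) true * m * ~~ side l + g (side i) false * n * side l)%:R.
Proof.
move=> hB; rewrite -mulmxE mxE big_split_ord /=.
rewrite (eq_bigr (fun _ => (g (side i) true * ~~ side l)%:R)); last first.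
  move=> k _; rewrite hB /Kmn_adj mxE /= ltn_ord -natrM; by case: (side l).
rewrite [X in _ + X](eq_bigr (fun _ => (g (side i) false * side l)%:R)); last first.
  move=> k _; rewrite hB /Kmn_adj mxE /=.
  have -> : (m + k < m)%N = false by rewrite ltnNge leq_addr.
  rewrite -natrM; by case: (side l).
rewrite !sumr_const !card_ord -!mulrnA -natrD; congr (_%:R).
ring.
Qed.

Lemma powA j i l :
  (A ^+ (j.*2.+1)) i l = ((side i != side l) * (m * n) ^ j)%N%:R /\
  (A ^+ (j.*2.+2)) i l = ((side i == side l) *
       (if side i then n ^ j.+1 * m ^ j else m ^ j.+1 * n ^ j))%N%:R.
Proof.
elim: j i l => [|j IH] i l.
  have h1 : forall i l, (A ^+ 1) i l = ((side i != side l) * (m * n) ^ 0)%N%:R.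
    by move=> i' l'; rewrite expr1 /Kmn_adj mxE muln1.
  split; first exact: h1.
  rewrite exprSr (mulA_entry _ (fun a b => ((a != b) * (m * n) ^ 0)%N) _ _ h1).
  by case: (side i); case: (side l) => /=; rewrite ?expn0 ?expn1; congr (_%:R); lia.
have hE : forall i l, (A ^+ (j.*2.+2)) i l = (((side i == side l) *
       (if side i then n ^ j.+1 * m ^ j else m ^ j.+1 * n ^ j)))%N%:R.
  by move=> i' l'; case: (IH i' l').
have hO : forall i l, (A ^+ (j.+1).*2.+1) i l =
     ((side i != side l) * (m * n) ^ j.+1)%N%:R.
  move=> i' l'; rewrite doubleS exprSr (mulA_entry _ (fun a b => ((a == b) * (if a then n ^ j.+1 * m ^ j else m ^ j.+1 * n ^ j))%N) _ _ hE).
  by case: (side i'); case: (side l') => /=; congr (_%:R);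
    rewrite !expnS expnMn; lia.
split; first exact: hO.
rewrite exprSr (mulA_entry _ (fun a b => ((a != b) * (m * n) ^ j.+1)%N) _ _ hO).
by case: (side i); case: (side l) => /=; congr (_%:R);
    rewrite ?expnS expnMn; lia.
Qed.

End Pow.

Lemma oddcase k : exists j, k.+1 = j.*2.+1 \/ k.+1 = j.*2.+2.
Proof.
exists k./2; move: (odd_double_half k); case: (odd k) => /= h; [right|left]; lia.
Qed.

Lemma series_x (R : realType) (m : nat) (s : R) :
  let x := fun k : nat => (1 - m%:R^-1) * (k == 0)%N%:R + cos_coeff s k / m%:R in
  series x @ \oo --> (1 - m%:R^-1) + cos s / m%:R.
Proof.
move=> x.
rewrite -cvg_shiftS.
have -> : [sequence series x n.+1]_n =
   (fun N => (1 - m%:R^-1) + series (cos_coeff s) N.+1 / m%:R).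
  apply/funext => N /=; rewrite /series /= !big_nat_recl //= /x /= mulr1.
  rewrite -addrA; congr (_ + _); under eq_bigr do rewrite mulr0 add0r.
  by rewrite [RHS]mulrDl mulr_suml.
apply: cvgD; first exact: cvg_cst.
apply: cvgMl.
rewrite (cvg_shiftS (series (cos_coeff s))).
rewrite unlock; exact: is_cvg_series_cos_coeff.
Qed.

Lemma scaleX (K : comRingType) N (a : K) (B : 'M[K]_N) k :
  (a *: B) ^+ k = a ^+ k *: B ^+ k.
Proof.
elim: k => [|k IH]; first by rewrite !expr0 scale1r.
by rewrite !exprS IH -!mulmxE -scalemxAl -scalemxAr scalerA.
Qed.

Lemma fld (K : fieldType) (E T N M F : K) j : M != 0 -> F != 0 ->
  -1 * E * T * (N ^+ j.+1 * M ^+ j) / F =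
  -1 * E * (T * (M * N) ^+ j.+1) / F / M.
Proof.
move=> h h'; rewrite exprMn (exprS M); move: (M ^+ j) (N ^+ j.+1) => P Q.
by field; rewrite h h'.
Qed.

Lemma key (R : realType) (m n : nat) (hm : (1 <= m)%N)
  (u : 'I_(m + n)) (hu : (u < m)%N) (t : R) :
  transition (Kmn_adj R m n) t u u =
   ((1 - m%:R^-1) + cos (t * Num.sqrt (m * n)%:R) / m%:R)%:C%C.
Proof.
have m0 : (m%:R : R) != 0 by rewrite pnatr_eq0 -lt0n.
rewrite /transition /mxexp mxE.
set c := ('i%C * t%:C%C).
set s := t * Num.sqrt (m * n)%:R.
set x := fun k : nat => (1 - m%:R^-1) * (k == 0)%N%:R + cos_coeff s k / m%:R.
have hterm : forall k, ((c *: Kmn_adj R m n) ^+ k) u u / (k`!)%:R = (x k)%:C%C.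
  case=> [|k].
    rewrite expr0 mxE eqxx /x /= /cos_coeff /= !expr0 !mulr1 !divr1 mul1r.
    by rewrite subrK.
  have [j [->|->]] := oddcase k.
    rewrite scaleX mxE (powA R m n j u u).1 eqxx /= mul0n mulr0 mul0r.
    by rewrite /x cos_coeff_odd mulr0 mul0r addr0 rmorph0.
  rewrite scaleX mxE (powA R m n j u u).2 eqxx hu /= mul1n.
  rewrite /c exprMn -doubleS -mul2n exprM sqr_i.
  transitivity (((-1) ^+ j.+1 * t ^+ (2 * j.+1) * (n ^ j.+1 * m ^ j)%N%:R
                  / ((2 * j.+1)`!)%:R)%:C%C).
    by rewrite !rmorphM !rmorphXn fmorphV rmorphN1 !rmorph_nat.
  congr (_%:C%C).
  rewrite /x /= mulr0 add0r mul2n -cos_coeff'E /cos_coeff' /s exprMn.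
  rewrite -exprnP -mul2n !exprM sqr_sqrtr ?ler0n // natrM !natrX natrM exprS.
  by apply: fld => //; rewrite pnatr_eq0 -lt0n fact_gt0.
have -> : series (fun k => ((c *: Kmn_adj R m n) ^+ k) u u / (k`!)%:R) =
          (fun N => (series x N)%:C%C).
  apply/funext => N; rewrite /series /= rmorph_sum.
  by apply: eq_bigr => k _; rewrite hterm.
apply: cvg_lim; first exact: norm_hausdorff.
apply: cvgC; exact: series_x.
Qed.

Local Close Scope classical_set_scope.
Theorem proposition39 (R : realType) (m n : nat) (hm : (1 <= m)%N) (hn : (1 <= n)%N)
  (u : 'I_(m + n)) (hu : (u < m)%N) :
  sedentary (Kmn_adj R m n) u <-> (3 <= m)%N.
Proof.
have mn0 : (0 < (m * n)%:R :> R) by rewrite ltr0n muln_gt0 hm hn.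
have sq0 : 0 < Num.sqrt ((m * n)%:R : R) by rewrite sqrtr_gt0.
split.
- case=> C [/andP [C0 _] HC].
  case: (leqP 3 m) => // hm3.
  pose s : R := if m == 1%N then pi / 2 else pi.
  have s0 : 0 < s by rewrite /s; case: ifP => _; rewrite ?divr_gt0 ?pi_gt0.
  have := HC (s / Num.sqrt (m * n)%:R) (divr_gt0 s0 sq0).
  rewrite key // mulfVK ?gt_eqF //.
  have -> : (1 - m%:R^-1 + cos s / m%:R = 0 :> R).
    rewrite /s; case: (m) hm hm3 => [|[|[|k]]] //= _ _.
      by rewrite cos_pihalf mul0r invr1 subrr addr0.
    by rewrite cospi; field.
  by rewrite normR normr0 lecR leNgt C0.
- move=> hm3; exists (1 - 2 / m%:R).
  have m0 : (0 < m%:R :> R) by rewrite ltr0n.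
  have C0 : 0 < 1 - 2 / m%:R :> R.
    by rewrite subr_gt0 ltr_pdivrMr // mul1r ltr_nat.
  split.
    rewrite C0 /= lerBlDr lerDl divr_ge0 //.
  move=> t _; rewrite key // normR lecR.
  have h : 1 - 2 / m%:R <= 1 - m%:R^-1 + cos (t * Num.sqrt (m * n)%:R) / m%:R.
    have := cos_geN1 (t * Num.sqrt (m * n)%:R).
    set c := cos _ => hc.
    rewrite -(ler_pM2r m0) !mulrDl !mulNr mul1r !mulfVK ?gt_eqF //.
    rewrite mulrDl mulVf ?gt_eqF //.
    lra.
  by rewrite (le_trans h) // ler_norm.
Qed.
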